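(* For all $g,g'\in\mathbb R$ and all $p,q\in\Delta_d^{\mathcal S}$, \[ \ell^\Theta_{\mathrm C,\infty}\bigl(\mathcal G_g(p),\mathcal G_{g'}(q)\bigr)\le\ell^\Theta_{\mathrm C,\infty}(p,q)+\Delta^{-1/2}|g-g'|. \]
   Context: Finite state set $\mathcal S=\{1,\dots,m\}$ with a transition matrix $P=(P_{ij})$ (induced by a fixed policy in a finite MDP). $R_{ij}$ is the finite-valued $[0,1]$-valued random one-step reward conditioned on transition $i\to j$; $\nu^{(g)}_{ij}:=\mathrm{Law}(R_{ij}-g)$. $\Theta=\{\theta_1<\dots<\theta_d\}$ with constant stride $\Delta>0$; $\Delta_d$ the probability simplex of $\mathbb R^d$; $\Delta_d^{\mathcal S}$ families $(p_i)_{i\in\mathcal S}$, $p_i\in\Delta_d$. For $u\in\Delta_d$, $\eta^{u,0}:=\sum_ku_k\delta_{\theta_k}$. Categorical projection $\Pi^\Theta_{\mathrm C}$: $\delta_x\mapsto\delta_{\theta_1}$ if $x\le\theta_1$, $\delta_{\theta_d}$ if $x\ge\theta_d$, $\frac{\theta_{k+1}-x}{\Delta}\delta_{\theta_k}+\frac{x-\theta_k}{\Delta}\delta_{\theta_{k+1}}$ if $\theta_k\le x\le\theta_{k+1}$, extended linearly to laws. $\mathcal G_g(p)$ is the unique $q\in\Delta_d^{\mathcal S}$ with $\eta^{q_i,0}=\Pi^\Theta_{\mathrm C}(\sum_jP_{ij}(\nu^{(g)}_{ij}\ast\eta^{p_j,0}))$ for all $i$. Coordinate Cramér metric: $F_u(\theta_k):=\sum_{j\le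 k}u_j$, $\ell^\Theta_{\mathrm C}(u,v)^2:=\Delta\sum_{k=1}^{d-1}(F_u(\theta_k)-F_v(\theta_k))^2$, $\ell^\Theta_{\mathrm C,\infty}(p,q):=\max_i\ell^\Theta_{\mathrm C}(p_i,q_i)$. *)

(* Defs.v *)
(* Real scalars: an arbitrary real closed field R (rcfType),
   which covers the reals and provides Num.sqrt. *)
From HB Require Import structures.
From mathcomp Require Import all_boot all_order all_algebra.
Set Implicit Arguments. Unset Strict Implicit. Unset Printing Implicit Defensive.
Import Order.TTheory GRing.Theory Num.Theory.
Local Open Scope ring_scope.

Section Defs.
Variable R : rcfType.

(* Support grid: theta_(k) = theta1 + k * Delta  (0-based index k), so the
   grid has constant stride Delta; the paper's theta_1 is th theta1 Delta 0. *)
Definition th (theta1 Delta : R) (k : nat) : R := theta1 + k%:R * Delta.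

(* Categorical projection of the Dirac mass delta_x : weight put on the atom
   theta_(l), l : 'I_d (0-based), following the paper's three cases. *)
Definition cproj (d : nat) (theta1 Delta x : R) (l : 'I_d) : R :=
  let t := th theta1 Delta in
  if x <= t 0%N then (nat_of_ord l == 0%N)%:R
  else if t d.-1 <= x then (nat_of_ord l == d.-1)%:R
  else (if (t l <= x) && (x < t l.+1) then (t l.+1 - x) / Delta else 0)
     + (if (0 < nat_of_ord l)%N && (t l.-1 < x) && (x < t l)
        then (x - t l.-1) / Delta else 0).

Definition simplex (d : nat) (u : 'I_d -> R) : Prop :=
  (forall k, 0 <= u k) /\ \sum_(k < d) u k = 1.

(* The transition i -> j has probability P i j; the reward R_ij is finitely
   valued: it takes value rv i j a with probability rw i j a (a : 'I_n).
   G_g(p)_i is the coordinate vector of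
     Pi_C ( sum_j P_ij ( Law(R_ij - g) * sum_k p_jk delta_theta_k ) ),
   computed by linearity of Pi_C:  the mixture puts mass
   P_ij * rw_ija * p_jk on the point rv_ija - g + theta_k. *)
Definition Gop (m d n : nat) (P : 'M[R]_m) (rv rw : 'I_m -> 'I_m -> 'I_n -> R)
  (theta1 Delta g : R) (p : 'I_m -> 'I_d -> R) : 'I_m -> 'I_d -> R :=
  fun i l => \sum_(j < m) P i j * \sum_(a < n) rw i j a *
      \sum_(k < d) p j k * cproj theta1 Delta (rv i j a - g + th theta1 Delta k) l.

Definition cdf (d : nat) (u : 'I_d -> R) (k : 'I_d) : R :=
  \sum_(j < d | (nat_of_ord j <= nat_of_ord k)%N) u j.

(* Coordinate Cramer metric: sum over k = 1..d-1 (paper), i.e. 0-based k < d-1. *)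
Definition cramer (d : nat) (Delta : R) (u v : 'I_d -> R) : R :=
  Num.sqrt (Delta * \sum_(k < d | (nat_of_ord k < d.-1)%N) (cdf u k - cdf v k) ^+ 2).

(* Sup version over states (max of nonnegative numbers; 0 if m = 0). *)
Definition cramer_inf (m d : nat) (Delta : R) (p q : 'I_m -> 'I_d -> R) : R :=
  \big[Num.max/0]_(i < m) cramer Delta (p i) (q i).

End Defs.

(* Main.v *)
Require Import Defs.
From HB Require Import structures.
From mathcomp Require Import all_boot all_order all_algebra.
From mathcomp Require Import lra ring.
Import Order.TTheory GRing.Theory Num.Theory.
Local Open Scope ring_scope.


Section Aux.
Variable R : rcfType.

Lemma CS (I : finType) (x y : I -> R) :
  (\sum_i x i * y i) ^+ 2 <= (\sum_i x i ^+ 2) * (\sum_i y i ^+ 2).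
Proof.
set Sx := \sum_i x i ^+ 2; set Sy := \sum_i y i ^+ 2; set Sxy := \sum_i x i * y i.
have H : 0 <= \sum_i \sum_j (x i * y j - x j * y i) ^+ 2.
  by apply: sumr_ge0 => i _; apply: sumr_ge0 => j _; exact: sqr_ge0.
have eA : Sx * Sy = \sum_i \sum_j x i ^+ 2 * y j ^+ 2.
  by rewrite /Sx /Sy big_distrl; apply: eq_bigr => i _; rewrite big_distrr.
have eB : Sy * Sx = \sum_i \sum_j x j ^+ 2 * y i ^+ 2.
  rewrite /Sx /Sy big_distrl; apply: eq_bigr => i _; rewrite big_distrr.
  by apply: eq_bigr => j _; rewrite mulrC.
have eC : Sxy * Sxy = \sum_i \sum_j (x i * y i) * (x j * y j).
  by rewrite /Sxy big_distrl; apply: eq_bigr => i _; rewrite big_distrr.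
have E : \sum_i \sum_j (x i * y j - x j * y i) ^+ 2 =
   \sum_i \sum_j x i ^+ 2 * y j ^+ 2 + \sum_i \sum_j x j ^+ 2 * y i ^+ 2
   - (\sum_i \sum_j (x i * y i) * (x j * y j) + \sum_i \sum_j (x i * y i) * (x j * y j)).
  rewrite -!big_split -sumrN -big_split /=; apply: eq_bigr => i _.
  rewrite -!big_split -sumrN -big_split /=; apply: eq_bigr => j _.
  ring.
rewrite E -eA -eB -eC in H.
have -> : Sxy ^+ 2 = Sxy * Sxy by rewrite expr2.
lra.
Qed.

Lemma Jen (I : finType) (mu x : I -> R) :
  (forall i, 0 <= mu i) -> \sum_i mu i <= 1 ->
  (\sum_i mu i * x i) ^+ 2 <= \sum_i mu i * x i ^+ 2.
Proof.
move=> h0 h1.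
have := @CS I (fun i => Num.sqrt (mu i) * x i) (fun i => Num.sqrt (mu i)).
have e1 : forall i, Num.sqrt (mu i) ^+ 2 = mu i by move=> i; rewrite sqr_sqrtr.
have -> : \sum_i Num.sqrt (mu i) * x i * Num.sqrt (mu i) = \sum_i mu i * x i.
  by apply: eq_bigr => i _; rewrite mulrAC -expr2 e1.
have -> : \sum_i (Num.sqrt (mu i) * x i) ^+ 2 = \sum_i mu i * x i ^+ 2.
  by apply: eq_bigr => i _; rewrite exprMn e1.
have -> : \sum_i Num.sqrt (mu i) ^+ 2 = \sum_i mu i.
  by apply: eq_bigr => i _; rewrite e1.
have h2 : 0 <= \sum_i mu i * x i ^+ 2.
  by apply: sumr_ge0 => i _; apply: mulr_ge0 => //; exact: sqr_ge0.
move=> h; apply: (le_trans h); nra.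
Qed.

Lemma mix (I : finType) (K : nat) (w : I -> R) (Z : I -> nat -> R) (Bd : R) :
  (forall i, 0 <= w i) -> \sum_i w i = 1 ->
  (forall i, \sum_(k < K) Z i k <= Bd) ->
  \sum_(k < K) \sum_i w i * Z i k <= Bd.
Proof.
move=> h0 h1 hZ.
rewrite exchange_big /=.
apply: (@le_trans _ _ (\sum_i w i * Bd)).
  apply: ler_sum => i _; rewrite -mulr_sumr; exact: ler_wpM2l.
by rewrite -mulr_suml h1 mul1r.
Qed.

Lemma schur (K : nat) (b : nat -> nat -> R) (W : nat -> R) :
  (forall k l, 0 <= b k l) ->
  (forall k, \sum_(l < K) b k l <= 1) ->
  (forall l, \sum_(k < K) b k l <= 1) ->
  \sum_(k < K) (\sum_(l < K) b k l * W l) ^+ 2 <= \sum_(l < K) W l ^+ 2.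
Proof.
move=> h0 h1 h2.
apply: (@le_trans _ _ (\sum_(k < K) \sum_(l < K) b k l * W l ^+ 2)).
  apply: ler_sum => k _; apply: Jen => //.
rewrite exchange_big /=; apply: ler_sum => l _.
rewrite -mulr_suml; apply: ler_piMl; first exact: sqr_ge0.
exact: h2.
Qed.

Lemma mink (K : nat) (a b : nat -> R) (A B : R) :
  0 <= A -> 0 <= B ->
  \sum_(k < K) a k ^+ 2 <= A ^+ 2 -> \sum_(k < K) b k ^+ 2 <= B ^+ 2 ->
  \sum_(k < K) (a k + b k) ^+ 2 <= (A + B) ^+ 2.
Proof.
move=> hA hB ha hb.
have hc := @CS 'I_K (fun k => a k) (fun k => b k).
have E : \sum_(k < K) (a k + b k) ^+ 2 =
  \sum_(k < K) a k ^+ 2 + \sum_(k < K) b k ^+ 2 + 2 * \sum_(k < K) a k * b k.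
  rewrite mulr_sumr -!big_split /=; apply: eq_bigr => k _; ring.
rewrite E.
set Sa := \sum_(k < K) a k ^+ 2 in ha hc *.
set Sb := \sum_(k < K) b k ^+ 2 in hb hc *.
set Sab := \sum_(k < K) a k * b k in hc *.
have ha0 : 0 <= Sa by apply: sumr_ge0 => k _; exact: sqr_ge0.
have hb0 : 0 <= Sb by apply: sumr_ge0 => k _; exact: sqr_ge0.
have h3 : Sab ^+ 2 <= (A * B) ^+ 2.
  apply: (le_trans hc); rewrite exprMn; apply: ler_pM => //.
have h4 : Sab <= A * B.
  have hAB : 0 <= A * B by exact: mulr_ge0.
  move: h3; rewrite !expr2 => h3.
  nra.
nra.
Qed.

End Aux.


Section Aux2.
Variable R : rcfType.

Definition clamp01 (y : R) : R := if y <= 0 then 0 else if 1 <= y then 1 else y.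
Definition psi (k : nat) (u : R) : R := clamp01 (k%:R - u).
Definition clampK (K : nat) (u : R) : R :=
  if u <= 0 then 0 else if K%:R <= u then K%:R else u.

Lemma clamp_ge0 y : 0 <= clamp01 y.
Proof. rewrite /clamp01; case: ifP => h1; [lra|case: ifP => h2; lra]. Qed.
Lemma clamp_le1 y : clamp01 y <= 1.
Proof. rewrite /clamp01; case: ifP => h1; [lra|case: ifP => h2; lra]. Qed.
Lemma clamp_mono a b : a <= b -> clamp01 a <= clamp01 b.
Proof.
rewrite /clamp01 => h; case: ifP => h1; case: ifP => h2; try case: ifP => h3;
  try case: ifP => h4; lra.
Qed.

Lemma psi_ge0 k u : 0 <= psi k u. Proof. exact: clamp_ge0. Qed.
Lemma psi_le1 k u : psi k u <= 1. Proof. exact: clamp_le1. Qed.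

Lemma psi_sum (K : nat) u :
  \sum_(k < K) psi k.+1 u = K%:R - clampK K u.
Proof.
elim: K => [|K IH]; first by rewrite big_ord0 /clampK; case: ifP => h; [lra|
   case: ifP => h2; lra].
rewrite big_ord_recr /= IH /psi /clampK /clamp01 -!natr1.
have hK : 0 <= K%:R :> R by exact: ler0n.
case: ifP => h1; case: ifP => h2; try case: ifP => h3; try case: ifP => h4;
  try case: ifP => h5; try case: ifP => h6; lra.
Qed.

Lemma clampK_lip K u u' : u <= u' -> 0 <= clampK K u' - clampK K u <= u' - u.
Proof.
move=> h; have hK : 0 <= K%:R :> R by exact: ler0n.
rewrite /clampK; case: ifP => h1; case: ifP => h2; try case: ifP => h3;
  try case: ifP => h4; apply/andP; split; lra.
Qed.

Lemma sq_sum (K : nat) (v : nat -> R) :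
  (forall k, 0 <= v k) -> \sum_(k < K) v k ^+ 2 <= (\sum_(k < K) v k) ^+ 2.
Proof.
move=> h; elim: K => [|K IH]; first by rewrite !big_ord0 expr2 mulr0.
rewrite !big_ord_recr /=.
have h0 : 0 <= \sum_(k < K) v k by apply: sumr_ge0.
have := h K; move: IH; rewrite !expr2; nra.
Qed.

Lemma shift_bound (K : nat) u u' :
  \sum_(k < K) (psi k.+1 u - psi k.+1 u') ^+ 2 <= (u - u') ^+ 2.
Proof.
wlog huu : u u' / u <= u'.
  move=> W; case: (lerP u u') => h; first exact: W.
  rewrite (eq_bigr (fun k : 'I_K => (psi k.+1 u' - psi k.+1 u) ^+ 2)).
    rewrite -sqrrN opprB; apply: W; lra.
  by move=> k _; rewrite -sqrrN opprB.
have hv : forall k : nat, 0 <= psi k.+1 u - psi k.+1 u'.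
  move=> k; rewrite subr_ge0; apply: clamp_mono; lra.
apply: le_trans; first exact: (sq_sum K _ hv).
rewrite sumrB !psi_sum.
have := @clampK_lip K u u' huu; move=> /andP[h1 h2].
have -> : K%:R - clampK K u - (K%:R - clampK K u') = clampK K u' - clampK K u by ring.
rewrite !expr2; nra.
Qed.

Lemma beta_ge0 k s (l : nat) : 0 <= psi k.+1 (s + l%:R) - psi k.+1 (s + l.+1%:R).
Proof. rewrite subr_ge0; apply: clamp_mono; rewrite -natr1; lra. Qed.

Lemma beta_rows k s (K : nat) :
  \sum_(l < K) (psi k.+1 (s + l%:R) - psi k.+1 (s + l.+1%:R)) <= 1.
Proof.
rewrite -(big_mkord xpredT (fun l => psi k.+1 (s + l%:R) - psi k.+1 (s + l.+1%:R))).
rewrite (telescope_sumr_eq (fun l => - psi k.+1 (s + l%:R))) //; last first.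
  by move=> l _; rewrite opprK addrC.
have := psi_ge0 k.+1 (s + K%:R); have := psi_le1 k.+1 (s + 0%:R); lra.
Qed.

Lemma beta_cols l s (K : nat) :
  \sum_(k < K) (psi k.+1 (s + l%:R) - psi k.+1 (s + l.+1%:R)) <= 1.
Proof.
have e : forall k : nat, psi k.+1 (s + l.+1%:R) = psi k (s + l%:R).
  by move=> k; rewrite /psi -!natr1; congr clamp01; ring.
rewrite (eq_bigr (fun k : 'I_K => psi k.+1 (s + l%:R) - psi k (s + l%:R)));
  last by move=> k _; rewrite e.
rewrite -(big_mkord xpredT (fun k => psi k.+1 (s + l%:R) - psi k (s + l%:R))).
rewrite telescope_sumr //.
have := psi_le1 K (s + l%:R); have := psi_ge0 0 (s + l%:R); lra.
Qed.

End Aux2.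
Arguments psi {R}. Arguments clamp01 {R}. Arguments clampK {R}.


Section Aux3.
Variable R : rcfType.
Variables (theta1 Delta : R).
Hypothesis hD : 0 < Delta.

Let y x := (x - theta1) / Delta.

Lemma thle n x : (th theta1 Delta n <= x) = (n%:R <= y x).
Proof. rewrite /y ler_pdivlMr // /th; apply/idP/idP; lra. Qed.
Lemma thlt n x : (th theta1 Delta n < x) = (n%:R < y x).
Proof. rewrite /y ltr_pdivlMr // /th; apply/idP/idP; lra. Qed.
Lemma thge n x : (x <= th theta1 Delta n) = (y x <= n%:R).
Proof. rewrite /y ler_pdivrMr // /th; apply/idP/idP; lra. Qed.
Lemma thgt n x : (x < th theta1 Delta n) = (y x < n%:R).
Proof. rewrite /y ltr_pdivrMr // /th; apply/idP/idP; lra. Qed.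
Lemma thv1 n x : (th theta1 Delta n - x) / Delta = n%:R - y x.
Proof. rewrite /y /th; field; exact: lt0r_neq0. Qed.
Lemma thv2 n x : (x - th theta1 Delta n) / Delta = y x - n%:R.
Proof. rewrite /y /th; field; exact: lt0r_neq0. Qed.

Definition psit (n : nat) (u : R) := if n == 0%N then 0 else psi n u.

Lemma cproj_formula (K : nat) x (l : 'I_K.+1) : (l < K)%N ->
  cproj theta1 Delta x l = psit l.+1 (y x) - psit l (y x).
Proof.
move=> hl; rewrite /cproj /= thge !thle !thgt !thlt thv1 thv2.
move: (y x) => u; move: hl; case: l => [n hn] /= hl.
have hK : n.+1%:R <= K%:R :> R by rewrite ler_nat.
move: hK; rewrite /psit /psi /clamp01.
rewrite (ltn_eqF hl).
case: n hn hl => [|n] hn hl /=.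
  rewrite -[1%:R]natr1 => hK.
  have h0 : (0%:R : R) = 0 by [].
  rewrite ?h0.
  by repeat (case: ifP => ?); lra.
rewrite -[n.+2%:R]natr1 -[n.+1%:R]natr1 => hK.
have h0 : 0 <= n%:R :> R by exact: ler0n.
by repeat (case: ifP => ?); lra.
Qed.


Lemma cdf_cproj (K : nat) x (k0 : 'I_K.+1) : (k0 < K)%N ->
  cdf (fun l : 'I_K.+1 => cproj theta1 Delta x l) k0 = psi k0.+1 (y x).
Proof.
move=> hk; rewrite /cdf.
rewrite (eq_bigr (fun j : 'I_K.+1 => psit j.+1 (y x) - psit j (y x))); last first.
  move=> j hj; apply: cproj_formula; exact: leq_ltn_trans hj hk.
have -> : \sum_(j < K.+1 | (j <= k0)%N) (psit j.+1 (y x) - psit j (y x)) =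
    \sum_(j < k0.+1) (psit j.+1 (y x) - psit j (y x)).
  by rewrite (big_ord_widen K.+1 (fun j => psit j.+1 (y x) - psit j (y x))).
rewrite -(big_mkord xpredT (fun j => psit j.+1 (y x) - psit j (y x))).
by rewrite telescope_sumr // /psit /= subr0.
Qed.

Lemma cdf_Gop (m K n : nat) (P : 'M[R]_m) (rv rw : 'I_m -> 'I_m -> 'I_n -> R)
  g (p : 'I_m -> 'I_K.+1 -> R) i (k0 : 'I_K.+1) : (k0 < K)%N ->
  cdf (Gop P rv rw theta1 Delta g p i) k0 =
  \sum_(j < m) P i j * \sum_(a < n) rw i j a *
     \sum_(l < K.+1) p j l * psi k0.+1 ((rv i j a - g) / Delta + (val l)%:R).
Proof.
move=> hk; rewrite /cdf /Gop exchange_big; apply: eq_bigr => j _.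
rewrite -mulr_sumr; congr (_ * _).
rewrite exchange_big; apply: eq_bigr => a _.
rewrite -mulr_sumr; congr (_ * _).
rewrite exchange_big; apply: eq_bigr => l _.
rewrite -mulr_sumr; congr (_ * _).
have := @cdf_cproj K (rv i j a - g + th theta1 Delta l) k0 hk; rewrite /cdf => ->.
congr psi; rewrite /y /th; field; exact: lt0r_neq0.
Qed.

End Aux3.


Lemma abel (R : rcfType) (w f : nat -> R) n :
  \sum_(l < n.+1) w l * f l =
  \sum_(l < n) (\sum_(l' < l.+1) w l') * (f l - f l.+1) + (\sum_(l' < n.+1) w l') * f n.
Proof.
elim: n => [|n IH]; first by rewrite !big_ord1 big_ord0 add0r.
rewrite big_ord_recr /= IH [in RHS]big_ord_recr /= [X in _ = _ + X * _]big_ord_recr /=.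
ring.
Qed.

Lemma cinf_ge0 (R : rcfType) m d (D : R) (p q : 'I_m -> 'I_d -> R) :
  0 <= cramer_inf D p q.
Proof.
rewrite /cramer_inf; elim/big_ind: _ => //.
by move=> x y hx hy; rewrite le_max hx.
by move=> i _; rewrite /cramer sqrtr_ge0.
Qed.

Lemma cdf_diff (R : rcfType) K (u v : 'I_K.+1 -> R) (k0 : 'I_K.+1) :
  cdf u k0 - cdf v k0 = \sum_(l' < k0.+1) (u (inord l') - v (inord l')).
Proof.
rewrite (big_ord_widen K.+1 (fun l' => u (inord l') - v (inord l'))) ?ltn_ord //.
rewrite /cdf -sumrB; apply: eq_bigr => l _; by rewrite inord_val.
Qed.


Theorem lemma7 (R : rcfType) (m d n : nat) (P : 'M[R]_m)
  (rv rw : 'I_m -> 'I_m -> 'I_n -> R) (theta1 Delta : R)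
  (hDelta : 0 < Delta)
  (hP0 : forall i j, 0 <= P i j)
  (hP1 : forall i, \sum_(j < m) P i j = 1)
  (hrv : forall i j a, 0 <= rv i j a <= 1)
  (hrw0 : forall i j a, 0 <= rw i j a)
  (hrw1 : forall i j, \sum_(a < n) rw i j a = 1)
  (g g' : R) (p q : 'I_m -> 'I_d -> R)
  (hp : forall i, simplex (p i)) (hq : forall i, simplex (q i)) :
  cramer_inf Delta (Gop P rv rw theta1 Delta g p) (Gop P rv rw theta1 Delta g' q)
  <= cramer_inf Delta p q + `|g - g'| / Num.sqrt Delta.
Proof.
have hr : 0 < Num.sqrt Delta by rewrite sqrtr_gt0.
have hB0 : 0 <= `|g - g'| / Num.sqrt Delta by apply: divr_ge0 => //; exact: ltW.
have hM0 : 0 <= cramer_inf Delta p q by exact: cinf_ge0.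
have hMj : forall j, cramer Delta (p j) (q j) <= cramer_inf Delta p q.
  by move=> j; rewrite /cramer_inf (bigD1 j) //= le_max lexx.
rewrite {1}/cramer_inf; elim/big_ind: _ => //.
- lra.
- by move=> x y hx hy; rewrite ge_max hx.
move=> i _.
move: hMj hM0; set M := cramer_inf Delta p q => hMj hM0.
destruct d as [|K].
  rewrite /cramer big1 ?mulr0 ?sqrtr0; [lra | by case].
rewrite /cramer /=.
pose s (j : 'I_m) (a : 'I_n) := (rv i j a - g) / Delta.
pose s' (j : 'I_m) (a : 'I_n) := (rv i j a - g') / Delta.
pose c1 (k : nat) := \sum_(j < m) P i j * \sum_(a < n) rw i j a *
   \sum_(l < K.+1) (p j l - q j l) * psi k.+1 (s j a + (val l)%:R).
pose c2 (k : nat) := \sum_(j < m) P i j * \sum_(a < n) rw i j a *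
   \sum_(l < K.+1) q j l * (psi k.+1 (s j a + (val l)%:R) - psi k.+1 (s' j a + (val l)%:R)).
have Ec : \sum_(k < K.+1 | (k < K)%N)
        (cdf (Gop P rv rw theta1 Delta g p i) k -
         cdf (Gop P rv rw theta1 Delta g' q i) k) ^+ 2 =
   \sum_(k < K) (c1 k + c2 k) ^+ 2.
  rewrite (big_ord_widen K.+1 (fun k => (c1 k + c2 k) ^+ 2)) //.
  apply: eq_bigr => k hk.
  rewrite !(@cdf_Gop R theta1 Delta hDelta) //; congr (_ ^+ 2).
  rewrite /c1 /c2 -sumrB -big_split /=; apply: eq_bigr => j _.
  rewrite -mulrBr -mulrDr -sumrB -big_split /=; congr (_ * _); apply: eq_bigr => a _.
  rewrite -mulrBr -mulrDr -sumrB -big_split /=; congr (_ * _); apply: eq_bigr => l _.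
  rewrite /s /s'; ring.
rewrite Ec.
have hA0 : 0 <= M / Num.sqrt Delta by apply: divr_ge0 => //; exact: ltW.
have hBB : 0 <= `|g - g'| / Delta by apply: divr_ge0 => //; exact: ltW.
have hc1 : \sum_(k < K) c1 k ^+ 2 <= (M / Num.sqrt Delta) ^+ 2.
  pose W (j : 'I_m) (l : nat) := \sum_(l' < l.+1) (p j (inord l') - q j (inord l')).
  pose bt (j : 'I_m) (a : 'I_n) (k l : nat) :=
    psi k.+1 (s j a + l%:R) - psi k.+1 (s j a + l.+1%:R).
  have e1 : forall u : 'I_K.+1 -> R, \sum_(l' < K.+1) u (inord l') = \sum_(l' < K.+1) u l'.
    by move=> u; apply: eq_bigr => l _; rewrite inord_val.
  have Ec1 : forall k, c1 k = \sum_(j < m) P i j * \sum_(a < n) rw i j a *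
      \sum_(l < K) bt j a k l * W j l.
    move=> k; rewrite /c1; apply: eq_bigr => j _; congr (_ * _).
    apply: eq_bigr => a _; congr (_ * _).
    rewrite (eq_bigr (fun l : 'I_K.+1 => (p j (inord l) - q j (inord l)) *
        psi k.+1 (s j a + (val l)%:R))); last by move=> l _; rewrite inord_val.
    rewrite (@abel R (fun l => p j (inord l) - q j (inord l))
                     (fun l => psi k.+1 (s j a + l%:R))) /=.
    have -> : \sum_(l' < K.+1) (p j (inord l') - q j (inord l')) = 0.
      rewrite sumrB (e1 (p j)) (e1 (q j)).
      by case: (hp j) => _ ->; case: (hq j) => _ ->; rewrite subrr.
    by rewrite mul0r addr0; apply: eq_bigr => l _; rewrite mulrC.
  have hW : forall j, \sum_(l < K) W j l ^+ 2 <= (M / Num.sqrt Delta) ^+ 2.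
    move=> j; have := hMj j; rewrite /cramer /=.
    rewrite (eq_bigr (fun k : 'I_K.+1 => W j k ^+ 2)); last by move=> k _; rewrite cdf_diff.
    rewrite -(big_ord_widen K.+1 (fun k => W j k ^+ 2)) //.
    set X := \sum_(l < K) W j l ^+ 2 => h.
    have hX : 0 <= X by apply: sumr_ge0 => l _; exact: sqr_ge0.
    have hDX : 0 <= Delta * X by apply: mulr_ge0 => //; exact: ltW.
    have h2 : Delta * X <= M ^+ 2.
      have := sqr_sqrtr hDX; have := sqrtr_ge0 (Delta * X); move: h.
      set t := Num.sqrt (Delta * X); rewrite !expr2; nra.
    by rewrite expr_div_n sqr_sqrtr ?(ltW hDelta) // ler_pdivlMr // mulrC.
  apply: (@le_trans _ _ (\sum_(k < K) \sum_(j < m) P i j *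
     (\sum_(a < n) rw i j a * (\sum_(l < K) bt j a k l * W j l) ^+ 2))).
    apply: ler_sum => k _; rewrite Ec1.
    apply: le_trans; first by apply: Jen => //; rewrite hP1.
    apply: ler_sum => j _; apply: ler_wpM2l => //.
    by apply: Jen => //; rewrite hrw1.
  apply: (@mix R _ K (fun j => P i j) (fun j k => \sum_(a < n) rw i j a *
     (\sum_(l < K) bt j a k l * W j l) ^+ 2)) => // j.
  apply: (@mix R _ K (fun a => rw i j a) (fun a k =>
     (\sum_(l < K) bt j a k l * W j l) ^+ 2)) => // a.
  apply: le_trans; last exact: hW j.
  apply: (@schur R K (bt j a) (W j)) => [k l|k|l]; rewrite /bt.
  - exact: beta_ge0.
  - exact: beta_rows.
  - exact: beta_cols.
have hc2 : \sum_(k < K) c2 k ^+ 2 <= (`|g - g'| / Delta) ^+ 2.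
  pose v (j : 'I_m) (a : 'I_n) (l : 'I_K.+1) (k : nat) :=
    psi k.+1 (s j a + (val l)%:R) - psi k.+1 (s' j a + (val l)%:R).
  apply: (@le_trans _ _ (\sum_(k < K) \sum_(j < m) P i j *
     (\sum_(a < n) rw i j a * (\sum_(l < K.+1) q j l * v j a l k ^+ 2)))).
    apply: ler_sum => k _; rewrite /c2.
    apply: le_trans; first by apply: Jen => //; rewrite hP1.
    apply: ler_sum => j _; apply: ler_wpM2l => //.
    apply: le_trans; first by apply: Jen => //; rewrite hrw1.
    apply: ler_sum => a _; apply: ler_wpM2l => //.
    apply: Jen; first by case: (hq j).
    by case: (hq j) => _ ->.
  apply: (@mix R _ K (fun j => P i j) (fun j k => \sum_(a < n) rw i j a *
     (\sum_(l < K.+1) q j l * v j a l k ^+ 2))) => // j.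
  apply: (@mix R _ K (fun a => rw i j a) (fun a k =>
     \sum_(l < K.+1) q j l * v j a l k ^+ 2)) => // a.
  apply: (@mix R _ K (fun l => q j l) (fun l k => v j a l k ^+ 2));
    [by case: (hq j) | by case: (hq j) | move=> l].
  rewrite /v; apply: le_trans; first exact: shift_bound.
  have -> : s j a + (val l)%:R - (s' j a + (val l)%:R) = (g' - g) / Delta.
    by rewrite /s /s'; field; exact: lt0r_neq0.
  by rewrite !expr_div_n real_normK ?num_real // -sqrrN opprB.
have H := @mink R K c1 c2 _ _ hA0 hBB hc1 hc2.
apply: (@le_trans _ _ (Num.sqrt (Delta * (M / Num.sqrt Delta + `|g - g'| / Delta) ^+ 2))).
  rewrite ler_sqrt; first by apply: ler_wpM2l; [exact: ltW | exact: H].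
  apply: mulr_ge0; [exact: ltW | exact: sqr_ge0].
rewrite sqrtrM; last exact: ltW.
rewrite sqrtr_sqr ger0_norm; last exact: addr_ge0.
have eD : Delta = Num.sqrt Delta ^+ 2 by rewrite sqr_sqrtr // ltW.
move: hr; set r := Num.sqrt Delta => hr.
rewrite {1}eD.
have -> : r * (M / r + `|g - g'| / r ^+ 2) = M + `|g - g'| / r.
  by field; exact: lt0r_neq0.
exact: lexx.
Qed.
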